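(* Let $L$ be the graph obtained from the line graph $L(K_{5,6})$ of the complete bipartite graph $K_{5,6}$ by adding, for every edge $uv$ of $L(K_{5,6})$, a new vertex adjacent exactly to $u$ and $v$. Let $L\overline{L}$ be the disjoint union of $L$ and its complement $\overline L$. Then $L\overline{L}$ is not $\cup$-equistable, i.e., neither $L\overline{L}$ nor its complement is equistable.
   Context: A graph $G=(V,E)$ is equistable if there is $\varphi:V\to\mathbb R_+$ such that for all $S\subseteq V$, $S$ is a maximal stable set of $G$ iff $\sum_{v\in S}\varphi(v)=1$. A graph is $\cup$-equistable if it or its complement is equistable. *)

(* Defs.v *)
From HB Require Import structures.
From mathcomp Require Import all_boot all_order all_algebra.
From mathcomp Require Import reals.
Set Implicit Arguments. Unset Strict Implicit. Unset Printing Implicit Defensive.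
Import Order.TTheory GRing.Theory Num.Theory.

(* A simple graph on a finite type T is given by a symmetric irreflexive
   adjacency relation (all graphs below are symmetric & irreflexive by
   construction). *)

Definition stable (T : finType) (e : rel T) (S : {set T}) : bool :=
  [forall x in S, forall y in S, ~~ e x y].

Definition maximal_stable (T : finType) (e : rel T) (S : {set T}) : bool :=
  maxset (stable e) S.

Definition equistable (R : realType) (T : finType) (e : rel T) : Prop :=
  exists phi : T -> R, (forall v, 0 <= phi v)%R /\
    forall S : {set T}, maximal_stable e S <-> (\sum_(v in S) phi v = 1)%R.

Definition compl_rel (T : finType) (e : rel T) : rel T :=
  fun x y => (x != y) && ~~ e x y.

Definition cup_equistable (R : realType) (T : finType) (e : rel T) : Prop :=
  equistable R e \/ equistable R (compl_rel e).

Definition union_rel (T1 T2 : finType) (e1 : rel T1) (e2 : rel T2)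
  : rel (T1 + T2)%type :=
  fun u v => match u, v with
             | inl x, inl y => e1 x y
             | inr x, inr y => e2 x y
             | _, _ => false
             end.

(* line graph of K_{5,6}: vertices are the edges (i,j) of K_{5,6},
   i in the 5-side, j in the 6-side; two are adjacent iff distinct and
   sharing an endpoint *)
Definition LK56_V := ('I_5 * 'I_6)%type.
Definition LK56 : rel LK56_V :=
  fun x y => (x != y) && ((x.1 == y.1) || (x.2 == y.2)).

Definition is_edge_set (T : finType) (e : rel T) (A : {set T}) : bool :=
  [exists x, exists y, e x y && (A == [set x; y])].

Definition edge_type (T : finType) (e : rel T) :=
  {A : {set T} | is_edge_set e A}.

Definition ext_V (T : finType) (e : rel T) := (T + edge_type e)%type.

Definition ext_rel (T : finType) (e : rel T) : rel (ext_V e) :=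
  fun u v => match u, v with
             | inl x, inl y => e x y
             | inl x, inr A => x \in val A
             | inr A, inl x => x \in val A
             | inr _, inr _ => false
             end.

Definition L_V := ext_V LK56.
Definition L_rel : rel L_V := @ext_rel _ LK56.

Definition LLbar_V := (L_V + L_V)%type.
Definition LLbar : rel LLbar_V := union_rel L_rel (compl_rel L_rel).

(* Main.v *)
Require Import Defs.
From mathcomp Require Import all_boot all_order all_algebra.
From mathcomp Require Import reals.
From mathcomp Require Import lra.
Set Implicit Arguments. Unset Strict Implicit. Unset Printing Implicit Defensive.
Import Order.TTheory GRing.Theory Num.Theory.

Lemma maxP_dom (T : finType) (e : rel T) (S : {set T}) :
  stable e S -> (forall x, x \notin S -> exists2 y, y \in S & e x y) ->
  maximal_stable e S.
Proof.
move=> stS dom; apply/maxsetP; split=> // B stB sSB.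
apply/eqP; rewrite eqEsubset andbC; apply/andP; split=> //.
apply/subsetP=> x xB; apply/negPn/negP=> xS; case: (dom x xS)=> y yS exy.
move/forallP: stB => /(_ x) /implyP /(_ xB) /forallP /(_ y) /implyP.
by move=> /(_ (subsetP sSB y yS)); rewrite exy.
Qed.

Definition liftL (P : {set LK56_V}) : {set L_V} := [set inl v | v in P].

Section Lift.
Variable P : {set LK56_V}.
Hypothesis hP : forall p q, p \in P -> q \in P -> p != q -> LK56 p q.
Hypothesis hnd : forall v, v \notin P -> exists2 p, p \in P & ~~ LK56 v p.
Hypothesis hcard : (2 < #|P|)%N.

Lemma lift_clique y y' : y \in liftL P -> y' \in liftL P -> ~~ compl_rel L_rel y y'.
Proof.
move=> /imsetP[p pP ->] /imsetP[q qP ->]; rewrite /compl_rel negb_and negbK.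
case: (eqVneq p q) => [->|npq]; first by rewrite eqxx.
by rewrite /L_rel /ext_rel /= hP ?orbT.
Qed.

Lemma lift_ne : exists p, p \in P.
Proof. by apply/card_gt0P; apply: leq_trans hcard. Qed.

Lemma lift_dom u : u \notin liftL P -> exists2 y, y \in liftL P & compl_rel L_rel u y.
Proof.
case: u => [v|A] uN.
- have vP : v \notin P by apply: contra uN => vP; apply: imset_f.
  case: (hnd vP) => p pP np; exists (inl p); first exact: imset_f.
  rewrite /compl_rel /L_rel /ext_rel /= np andbT.
  by apply: contraNneq vP => [[->]].
- have [p pP pA] : exists2 p, p \in P & p \notin val A.
    apply/exists_inP; rewrite -negb_forall_in; apply/negP => /forall_inP H.
    have sub : P \subset val A by apply/subsetP => p /H.
    move: (subset_leq_card sub); move: (valP A) => /existsP [x /existsP [y /andP [_ /eqP ->]]].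
    rewrite cards2 => h; have := leq_trans hcard h; by case: (x != y).
  by exists (inl p); [exact: imset_f | rewrite /compl_rel /L_rel /ext_rel /= pA].
Qed.

End Lift.

Local Open Scope ring_scope.

Definition rowS (i : 'I_5) : {set LK56_V} := [set (i, j) | j : 'I_6].
Definition colS (j : 'I_6) : {set LK56_V} := [set (i, j) | i : 'I_5].

Lemma mem_row i p : (p \in rowS i) = (p.1 == i).
Proof.
case: p => a b; apply/imsetP/eqP => [[j _ [-> _]] // | /= ->]; by exists b.
Qed.

Lemma mem_col j p : (p \in colS j) = (p.2 == j).
Proof.
case: p => a b; apply/imsetP/eqP => [[i _ [_ ->]] // | /= ->]; by exists a.
Qed.

Lemma row_props i :
  [/\ forall p q, p \in rowS i -> q \in rowS i -> p != q -> LK56 p q,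
      forall v, v \notin rowS i -> exists2 p, p \in rowS i & ~~ LK56 v p
    & (2 < #|rowS i|)%N].
Proof.
split.
- by move=> p q; rewrite !mem_row /LK56 => /eqP <- /eqP -> ->; rewrite eqxx.
- move=> v; rewrite mem_row => vi.
  exists (i, if v.2 == ord0 then ord_max else ord0); first by rewrite mem_row.
  rewrite /LK56 /= negb_and negb_or (negbTE vi) /=.
  case: ifP => /eqP h; [apply/orP; right; rewrite h | apply/orP; right; apply/eqP].   by rewrite eqE /=.
  by [].
- have inj : injective (pair i : 'I_6 -> 'I_5 * 'I_6) by move=> a b [].
  by rewrite /rowS (card_imset _ inj) card_ord.
Qed.

Lemma col_props j :
  [/\ forall p q, p \in colS j -> q \in colS j -> p != q -> LK56 p q,
      forall v, v \notin colS j -> exists2 p, p \in colS j & ~~ LK56 v p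
    & (2 < #|colS j|)%N].
Proof.
split.
- by move=> p q; rewrite !mem_col /LK56 => /eqP <- /eqP -> ->; rewrite eqxx orbT.
- move=> v; rewrite mem_col => vi.
  exists (if v.1 == ord0 then ord_max else ord0, j); first by rewrite mem_col.
  rewrite /LK56 /= negb_and negb_or (negbTE vi) /= andbT.
  case: ifP => /eqP h; [apply/orP; right; rewrite h | apply/orP; right; apply/eqP].   by rewrite eqE /=.
  by [].
- have inj : injective ((fun i => (i, j)) : 'I_5 -> 'I_5 * 'I_6) by move=> a b [].
  by rewrite /colS (card_imset _ inj) card_ord.
Qed.

Lemma sum_rc (R : realType) (h : LK56_V -> R) c :
  (forall i, \sum_(p in rowS i) h p = c) -> (forall j, \sum_(p in colS j) h p = c) ->
  c = 0.
Proof.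
move=> H1 H2.
have E1 : \sum_p h p = c *+ 5.
  rewrite (partition_big fst xpredT) //.
  transitivity (\sum_(i < 5) c); last by rewrite sumr_const card_ord.
  apply: eq_bigr => i _; rewrite -(H1 i); apply: eq_bigl => p.
  exact: (esym (mem_row i p)).
have E2 : \sum_p h p = c *+ 6.
  rewrite (partition_big snd xpredT) //.
  transitivity (\sum_(i < 6) c); last by rewrite sumr_const card_ord.
  apply: eq_bigr => i _; rewrite -(H2 i); apply: eq_bigl => p.
  exact: (esym (mem_col i p)).
have H : c *+ 5 + c = c *+ 5 + 0 by rewrite addr0 -mulrSr -E1 -E2.
exact: addrI H.
Qed.

Definition SS (S1 S2 : {set L_V}) : {set LLbar_V} :=
  [set x | match x with inl u => u \in S1 | inr u => u \in S2 end].

Lemma sum_SS (R : realType) (g : LLbar_V -> R) S1 S2 :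
  \sum_(x in SS S1 S2) g x = \sum_(u in S1) g (inl u) + \sum_(u in S2) g (inr u).
Proof.
rewrite big_sumType; congr (_ + _); apply: eq_bigl => u; exact: in_set.
Qed.

Lemma inl_eq (A B : eqType) (u v : A) : (inl u == inl v :> A + B) = (u == v).
Proof. by apply/eqP/eqP => [[]|->]. Qed.

Lemma sum_lift (R : realType) (g : L_V -> R) P :
  \sum_(u in liftL P) g u = \sum_(p in P) g (inl p).
Proof. by rewrite /liftL big_imset //= => a b _ _ []. Qed.

Lemma stable_SS S1 S2 : stable L_rel S1 -> stable (compl_rel L_rel) S2 ->
  stable LLbar (SS S1 S2).
Proof.
move=> /forallP st1 /forallP st2; apply/forallP => x; apply/implyP => xS.
apply/forallP => y; apply/implyP => yS; move: xS yS; rewrite !in_set.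
case: x => u; case: y => v //= uS vS.
- by move: (st1 u) => /implyP /(_ uS) /forallP /(_ v) /implyP /(_ vS).
- by move: (st2 u) => /implyP /(_ uS) /forallP /(_ v) /implyP /(_ vS).
Qed.

Lemma maxset_stable (T : finType) (e : rel T) S : maximal_stable e S -> stable e S.
Proof. by move/maxsetP => []. Qed.

Section Lift2.
Variable P : {set LK56_V}.
Hypothesis hP : forall p q, p \in P -> q \in P -> p != q -> LK56 p q.
Hypothesis hnd : forall v, v \notin P -> exists2 p, p \in P & ~~ LK56 v p.
Hypothesis hcard : (2 < #|P|)%N.

Lemma lift_stable : stable (compl_rel L_rel) (liftL P).
Proof.
apply/forallP => x; apply/implyP => xS; apply/forallP => y; apply/implyP => yS.
exact: (lift_clique hP xS yS).
Qed.

Lemma max_case2 : maximal_stable (compl_rel LLbar) (SS (liftL P) set0).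
Proof.
apply: maxP_dom.
- apply/forallP => x; apply/implyP => xS; apply/forallP => y; apply/implyP => yS.
  move: xS yS; rewrite !in_set; case: x => u; case: y => v //=; rewrite ?in_set0 // => uS vS.
  rewrite /compl_rel inl_eq; exact: (lift_clique hP uS vS).
- case=> u; rewrite in_set => uN.
  + have [y yS cy] := lift_dom hnd hcard uN.
    exists (inl y); first by rewrite in_set.
    by rewrite /compl_rel inl_eq.
  + have [p pP] := lift_ne hcard.
    exists (inl (inl p)); first by rewrite in_set; apply: imset_f.
    by [].
Qed.

Lemma max_case1 S1 : maximal_stable L_rel S1 ->
  maximal_stable LLbar (SS S1 (liftL P)).
Proof.
move=> mS1; apply/maxsetP; split.
  by apply: stable_SS; [exact: maxset_stable | exact: lift_stable].
move=> B stB sSB; apply/eqP; rewrite eqEsubset sSB andbT.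
apply/subsetP; case=> u uB; rewrite in_set.
- have stB1 : stable L_rel [set v | inl v \in B].
    apply/forallP => x; apply/implyP; rewrite in_set => xB.
    apply/forallP => y; apply/implyP; rewrite in_set => yB.
    by move/forallP: stB => /(_ _) /implyP /(_ xB) /forallP /(_ (inl y)) /implyP /(_ yB).
  have sub : S1 \subset [set v | inl v \in B].
    apply/subsetP => v vS; rewrite in_set; apply: (subsetP sSB).
    by rewrite in_set.
  move/maxsetP: mS1 => [_ /(_ _ stB1 sub) <-]; by rewrite in_set.
- apply/negPn/negP => uN.
  have [y yS cy] := lift_dom hnd hcard uN.
  have yB : inr y \in B by apply: (subsetP sSB); rewrite in_set.
  move/forallP: stB => /(_ _) /implyP /(_ uB) /forallP /(_ (inr y)) /implyP /(_ yB).
  by rewrite /LLbar /= cy.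
Qed.

End Lift2.

Theorem proposition40 (R : realType) :
  ~ cup_equistable R LLbar.
Proof.
case=> [[phi [phi0 Hphi]] | [phi [phi0 Hphi]]].
- have st0 : stable L_rel set0 by apply/forallP => x; rewrite in_set0.
  have [S1 mS1 _] := maxset_exists st0.
  set a := \sum_(u in S1) phi (inl u).
  have key : forall P : {set LK56_V},
      (forall p q, p \in P -> q \in P -> p != q -> LK56 p q) ->
      (forall v, v \notin P -> exists2 p, p \in P & ~~ LK56 v p) ->
      (2 < #|P|)%N ->
      \sum_(p in P) phi (inr (inl p)) = 1 - a.
    move=> P hP hnd hc.
    have := (Hphi _).1 (max_case1 hP hnd hc mS1).
    rewrite sum_SS sum_lift -/a => <-; by rewrite addrAC subrr add0r.
  have c0 := @sum_rc R (fun p => phi (inr (inl p))) (1 - a)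
    (fun i => let: And3 h1 h2 h3 := row_props i in key _ h1 h2 h3)
    (fun j => let: And3 h1 h2 h3 := col_props j in key _ h1 h2 h3).
  have a1 : a = 1 by move/eqP: c0; rewrite subr_eq0 => /eqP.
  have mS' : maximal_stable LLbar (SS S1 set0).
    by apply/(Hphi _).2; rewrite sum_SS big_set0 addr0.
  set z : L_V := inl (ord0, ord0).
  have stB : stable LLbar (SS S1 [set z]).
    apply: stable_SS; first exact: maxset_stable.
    apply/forallP => x; apply/implyP; rewrite in_set1 => /eqP ->.
    apply/forallP => y; apply/implyP; rewrite in_set1 => /eqP ->.
    by rewrite /compl_rel eqxx.
  have sub : SS S1 set0 \subset SS S1 [set z].
    apply/subsetP; case=> u; rewrite !in_set //.
  move/maxsetP: mS' => [_ /(_ _ stB sub)] => E.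
  have : inr z \in SS S1 [set z] by rewrite in_set in_set1.
  by rewrite E in_set in_set0.
- have key : forall P : {set LK56_V},
      (forall p q, p \in P -> q \in P -> p != q -> LK56 p q) ->
      (forall v, v \notin P -> exists2 p, p \in P & ~~ LK56 v p) ->
      (2 < #|P|)%N ->
      \sum_(p in P) phi (inl (inl p)) = 1.
    move=> P hP hnd hc.
    have := (Hphi _).1 (max_case2 hP hnd hc).
    by rewrite sum_SS sum_lift big_set0 addr0.
  have c0 := @sum_rc R (fun p => phi (inl (inl p))) 1
    (fun i => let: And3 h1 h2 h3 := row_props i in key _ h1 h2 h3)
    (fun j => let: And3 h1 h2 h3 := col_props j in key _ h1 h2 h3).
  by move/eqP: c0; rewrite oner_eq0.
Qed.
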